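(* Let $\mathcal Z,\mathcal S$ be finite, $f:\mathcal Z\times\mathcal S\to\mathbb R$, and $(Z_i,S_i)$, $i=1,\dots,n$, random variables with a common joint law $P_{ZS}$ (not depending on $i$) such that $\Pr[\mathbf S=\mathbf s\mid\mathbf Z=\mathbf z]=\prod_{i=1}^n\Pr[S_i=s_i\mid Z_i=z_i]$. Let $P_{S|Z}$ be the conditional of $P_{ZS}$. Then for every type $p$ with $\Pr[\hat p_{\mathbf Z}=p]>0$, $$\mathbb E\Big[\Big(\sum_{i=1}^n f(Z_i,S_i)\Big)^2\Big|\ \hat p_{\mathbf Z}=p\Big]=n^2\,\mathbb E_{P_{S|Z}\times p}[f(\tilde Z,S)]^2+n\,\mathbb E_{P_{S|Z}\times p}[f(\tilde Z,S)^2]-n\,\mathbb E_{p}\Big[\mathbb E_{P_{S|Z}}[f(\tilde Z,S)\mid\tilde Z]^2\Big],$$ where $(\tilde Z,S)$ has joint pmf $p(z)P_{S|Z}(s|z)$.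
   Context: $\mathbf Z=(Z_1,\dots,Z_n)$, $\mathbf S=(S_1,\dots,S_n)$; $\hat p_{\mathbf Z}$ is the empirical distribution (type) of $\mathbf Z$. *)

(* Defs.v *)
From mathcomp Require Import all_boot all_order all_algebra.
Set Implicit Arguments. Unset Strict Implicit. Unset Printing Implicit Defensive.
Import Order.TTheory GRing.Theory Num.Theory.
Local Open Scope ring_scope.

Section Prob.
Variables (R : realFieldType) (Omega : finType) (P : Omega -> R).

Definition is_pmf : Prop := (forall w, 0 <= P w) /\ \sum_w P w = 1.

Definition Pr (A : Omega -> bool) : R := \sum_(w | A w) P w.

Definition cE (X : Omega -> R) (A : Omega -> bool) : R :=
  (\sum_(w | A w) P w * X w) / Pr A.
End Prob.

Section Types.
Variables (R : realFieldType) (Omega Z : finType) (n : nat).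

Definition emp (Zv : 'I_n -> Omega -> Z) (w : Omega) : {ffun Z -> R} :=
  [ffun z => (#|[set i | Zv i w == z]|)%:R / n%:R].
End Types.

Section Cond.
Variables (R : realFieldType) (Z S : finType).

Definition condSZ (PZS : Z -> S -> R) (z : Z) (s : S) : R :=
  PZS z s / \sum_(s' : S) PZS z s'.

Definition Ejoint (PSZ : Z -> S -> R) (p : Z -> R) (g : Z -> S -> R) : R :=
  \sum_(z : Z) \sum_(s : S) p z * PSZ z s * g z s.

Definition Econd (PSZ : Z -> S -> R) (g : Z -> S -> R) (z : Z) : R :=
  \sum_(s : S) PSZ z s * g z s.

Definition Ep (p : Z -> R) (h : Z -> R) : R := \sum_(z : Z) p z * h z.
End Cond.

(* Main.v *)
Require Import Defs.
From mathcomp Require Import all_boot all_order all_algebra.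
From mathcomp Require Import ring.
Import Order.TTheory GRing.Theory Num.Theory.
Local Open Scope ring_scope.

Section Aux.
Context {R : realFieldType}.
Implicit Types I : finType.

Lemma prod_if1 {I : finType} (i : I) (g : I -> R) :
  \prod_k (if k == i then g k else 1) = g i.
Proof. by rewrite -big_mkcond big_pred1_eq. Qed.

Lemma core {n : nat} {S : finType} (q a : 'I_n -> S -> R) :
  (forall k, \sum_t q k t = 1) ->
  \sum_(s : {ffun 'I_n -> S}) (\prod_k q k (s k)) * (\sum_i a i (s i)) ^+ 2
  = (\sum_i \sum_t q i t * a i t) ^+ 2
    + \sum_i ((\sum_t q i t * a i t ^+ 2) - (\sum_t q i t * a i t) ^+ 2).
Proof.
move=> q1.
set m := fun i => \sum_t q i t * a i t.
set v := fun i => \sum_t q i t * a i t ^+ 2.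
have key : forall i j, \sum_(s : {ffun 'I_n -> S}) (\prod_k q k (s k)) * (a i (s i) * a j (s j))
   = if i == j then v i else m i * m j.
  move=> i j.
  pose F k t := q k t * ((if k == i then a i t else 1) * (if k == j then a j t else 1)).
  transitivity (\sum_(s : {ffun 'I_n -> S}) \prod_k F k (s k)).
    apply: eq_bigr => s _; rewrite /F big_split /= big_split /=.
    by rewrite (prod_if1 i (fun k => a i (s k))) (prod_if1 j (fun k => a j (s k))).
  rewrite -bigA_distr_bigA /=.
  case: (eqVneq i j) => [eij|ne]; first subst j.
  - rewrite -(prod_if1 i v); apply: eq_bigr => k _; rewrite /F.
    case: (eqVneq k i) => [->|_].
      by rewrite /v; apply: eq_bigr => t _; rewrite expr2.
    transitivity (\sum_t q k t); last exact: q1.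
    by apply: eq_bigr => t _; rewrite !mulr1.
  - rewrite -(prod_if1 i m) -(prod_if1 j m) -big_split /=.
    apply: eq_bigr => k _; rewrite /F.
    case ki: (k == i); case kj: (k == j);
      try (by move: ne; rewrite -(eqP ki) kj);
      try (rewrite (eqP ki)); try (rewrite (eqP kj)); rewrite ?mulr1 ?mul1r;
      try (transitivity (\sum_t q k t); last exact: q1);
      by apply: eq_bigr => t _; rewrite ?mulr1 ?mul1r.
rewrite (eq_bigr (fun s : {ffun 'I_n -> S} => \sum_i \sum_j (\prod_k q k (s k)) * (a i (s i) * a j (s j)))); last first.
  move=> s _; rewrite expr2 mulr_suml mulr_sumr; apply: eq_bigr => i _.
  by rewrite mulr_sumr mulr_sumr.
rewrite exchange_big /=.
rewrite (eq_bigr (fun i => \sum_j (if i == j then v i else m i * m j))); last first.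
  by move=> i _; rewrite exchange_big /=; apply: eq_bigr => j _; rewrite key.
rewrite expr2 mulr_suml -big_split /=; apply: eq_bigr => i _.
rewrite mulr_sumr (bigD1 i) //= eqxx [in RHS](bigD1 i) //=.
rewrite (eq_bigr (fun j => m i * m j)); last by move=> j /negbTE; rewrite eq_sym => ->.
rewrite -/(v i) -/(m i); ring.
Qed.

Lemma Pr_sub (Omega : finType) (P : Omega -> R) (A B : pred Omega) :
  (forall w, 0 <= P w) -> (forall w, A w -> B w) -> Pr P A <= Pr P B.
Proof.
move=> P0 h; rewrite /Pr big_mkcond [X in _ <= X]big_mkcond /=.
apply: ler_sum => w _; case Aw: (A w); first by rewrite (h w Aw).
by case: (B w).
Qed.

Lemma Pr_ge0 (Omega : finType) (P : Omega -> R) (A : pred Omega) :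
  (forall w, 0 <= P w) -> 0 <= Pr P A.
Proof. by move=> P0; apply: sumr_ge0. Qed.

Lemma part {Omega T : finType} {n : nat} (X : 'I_n -> Omega -> T)
  (Q : pred Omega) (G : Omega -> R) :
  \sum_(w | Q w) G w =
  \sum_(x : {ffun 'I_n -> T}) \sum_(w | Q w && [forall i, X i w == x i]) G w.
Proof.
rewrite (partition_big (fun w => [ffun i => X i w]) xpredT) //=.
apply: eq_bigr => x _; apply: eq_bigl => w; congr (_ && _).
apply/eqP/forallP => [<- i|h]; first by rewrite ffunE.
by apply/ffunP => i; rewrite ffunE (eqP (h i)).
Qed.

Definition empz {Z : finType} {n : nat} (z : {ffun 'I_n -> Z}) : {ffun Z -> R} :=
  [ffun y => (#|[set i | z i == y]|)%:R / n%:R].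

Lemma count_sum {Z : finType} {n : nat} {z : {ffun 'I_n -> Z}} {p : {ffun Z -> R}}
  (g : Z -> R) : empz z = p ->
  \sum_i g (z i) = n%:R * \sum_y p y * g y.
Proof.
move=> hp; rewrite (partition_big z xpredT) //= mulr_sumr.
apply: eq_bigr => y _.
rewrite (eq_bigr (fun _ => g y)); last by move=> i /eqP ->.
rewrite sumr_const -hp ffunE mulrA.
have -> : n%:R * (#|[set i | z i == y]|%:R / n%:R) = (#|[set i | z i == y]|%:R : R).
  case: (eqVneq (n%:R : R) 0) => [n0|nn0]; last by rewrite mulrC divfK.
  have /eqP n00 : n == 0%N by rewrite -(pnatr_eq0 R) n0.
  have : (#|[set i | z i == y]| <= n)%N by have := max_card (mem [set i | z i == y]); rewrite card_ord.
  by move/leq_trans/(_ (eq_leq n00)); rewrite leqn0 => /eqP ->; rewrite n0 mul0r.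
rewrite mulr_natl; congr (_ *+ _).
by apply: eq_card => i; rewrite !inE.
Qed.

End Aux.

Theorem lemma14 (R : realFieldType) (Z S Omega : finType) (n : nat)
  (f : Z -> S -> R) (P : Omega -> R)
  (Zv : 'I_n -> Omega -> Z) (Sv : 'I_n -> Omega -> S) (PZS : Z -> S -> R) :
  is_pmf P ->
  (* common joint law P_{ZS} of (Z_i, S_i), not depending on i *)
  (forall (i : 'I_n) (z : Z) (s : S),
     Pr P (fun w => (Zv i w == z) && (Sv i w == s)) = PZS z s) ->
  (* Pr[S = s | Z = z] = prod_i Pr[S_i = s_i | Z_i = z_i] *)
  (forall (z : {ffun 'I_n -> Z}) (s : {ffun 'I_n -> S}),
     0 < Pr P (fun w => [forall i, Zv i w == z i]) ->
     Pr P (fun w => [forall i, Zv i w == z i] && [forall i, Sv i w == s i])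
       / Pr P (fun w => [forall i, Zv i w == z i])
     = \prod_(i < n) (Pr P (fun w => (Zv i w == z i) && (Sv i w == s i))
                       / Pr P (fun w => Zv i w == z i))) ->
  forall p : {ffun Z -> R},
    0 < Pr P (fun w => emp R Zv w == p) ->
    cE P (fun w => (\sum_(i < n) f (Zv i w) (Sv i w)) ^+ 2) (fun w => emp R Zv w == p)
    = (n%:R) ^+ 2 * (Ejoint (condSZ PZS) p f) ^+ 2
      + n%:R * Ejoint (condSZ PZS) p (fun z s => (f z s) ^+ 2)
      - n%:R * Ep p (fun z => (Econd (condSZ PZS) f z) ^+ 2).
Proof.
move=> [P0 P1] hPZS hind p Ppos.
set K := (_ - _).
rewrite /cE.
suff -> : \sum_(w | emp R Zv w == p) P w * (\sum_(i < n) f (Zv i w) (Sv i w)) ^+ 2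
   = K * Pr P (fun w => emp R Zv w == p).
  by rewrite mulfK // gt_eqF.
rewrite /Pr (part Zv (fun w => emp R Zv w == p) (fun w => P w * (\sum_(i < n) f (Zv i w) (Sv i w)) ^+ 2)).
rewrite [in RHS](part Zv) mulr_sumr.
apply: eq_bigr => z _.
have hemp : forall w, [forall i, Zv i w == z i] -> emp R Zv w = empz z.
  move=> w /forallP h; apply/ffunP => y; rewrite !ffunE; congr (_%:R / _).
  by apply: eq_card => i; rewrite !inE (eqP (h i)).
have hpred : forall w, (emp R Zv w == p) && [forall i, Zv i w == z i]
    = (empz z == p) && [forall i, Zv i w == z i].
  by move=> w; case E: [forall i, _]; rewrite ?andbF ?andbT ?hemp.
rewrite (eq_bigl _ _ hpred) [in RHS](eq_bigl _ _ hpred).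
case: (eqVneq (empz z) p) => [hp|hne]; last by rewrite big_pred0 // big_pred0 // mulr0.
rewrite /=.
have hZi : forall i y, Pr P (fun w => Zv i w == y) = \sum_t PZS y t.
  move=> i y; rewrite /Pr (partition_big (Sv i) xpredT) //=.
  by apply: eq_bigr => t _; rewrite -(hPZS i y t).
rewrite (part Sv).
rewrite (eq_bigr (fun s : {ffun 'I_n -> S} =>
   Pr P (fun w => [forall i, Zv i w == z i] && [forall i, Sv i w == s i])
   * (\sum_i f (z i) (s i)) ^+ 2)); last first.
  move=> s _; rewrite /Pr mulr_suml; apply: eq_bigr => w /andP[/forallP hz /forallP hs].
  congr (_ * _ ^+ 2); apply: eq_bigr => i _; by rewrite (eqP (hz i)) (eqP (hs i)).
have PZge : 0 <= Pr P (fun w => [forall i, Zv i w == z i]) by apply: sumr_ge0.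
case: (eqVneq (Pr P (fun w => [forall i, Zv i w == z i])) 0) => [PZ0|PZn0].
  rewrite /Pr in PZ0; rewrite PZ0 mulr0; apply: big1 => s _.
  have h1 : Pr P (fun w => [forall i, Zv i w == z i] && [forall i, Sv i w == s i])
       <= Pr P (fun w => [forall i, Zv i w == z i]) by apply: Pr_sub => // w /andP[].
  rewrite /Pr PZ0 in h1.
  have -> : Pr P (fun w => [forall i, Zv i w == z i] && [forall i, Sv i w == s i]) = 0.
    by apply/eqP; rewrite eq_le h1 sumr_ge0.
  by rewrite mul0r.
have PZpos : 0 < Pr P (fun w => [forall i, Zv i w == z i]) by rewrite lt_def PZn0 PZge.
have hqpos : forall i, 0 < \sum_t PZS (z i) t.
  move=> i; rewrite -(hZi i); apply: lt_le_trans PZpos _.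
  by apply: Pr_sub => // w /forallP /(_ i).
have hq : forall s : {ffun 'I_n -> S},
    Pr P (fun w => [forall i, Zv i w == z i] && [forall i, Sv i w == s i])
    = Pr P (fun w => [forall i, Zv i w == z i]) * \prod_i condSZ PZS (z i) (s i).
  move=> s.
  have -> : \prod_i condSZ PZS (z i) (s i)
     = \prod_(i < n) (Pr P (fun w => (Zv i w == z i) && (Sv i w == s i))
                       / Pr P (fun w => Zv i w == z i)).
    by apply: eq_bigr => i _; rewrite /condSZ hPZS hZi.
  by rewrite -hind // mulrC divfK.
under eq_bigr => s _ do rewrite hq -mulrA.
rewrite -mulr_sumr mulrC /=; congr (_ * _).
rewrite (core (fun i t => condSZ PZS (z i) t) (fun i t => f (z i) t)); last first.
  move=> k; rewrite /condSZ -mulr_suml divff //; exact: lt0r_neq0 (hqpos k).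
have e1 := count_sum (Econd (condSZ PZS) f) hp.
have e2 := count_sum (Econd (condSZ PZS) (fun z s => f z s ^+ 2)) hp.
have e3 := count_sum (fun y => Econd (condSZ PZS) f y ^+ 2) hp.
rewrite /Econd /= in e1 e2 e3.
rewrite sumrB e1 e2 e3.
have j1 : forall g, Ejoint (condSZ PZS) p g = \sum_y p y * Econd (condSZ PZS) g y.
  move=> g; apply: eq_bigr => y _; rewrite mulr_sumr; apply: eq_bigr => t _; by rewrite mulrA.
rewrite /K !j1 /Ep /Econd /=.
ring.
Qed.
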